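(* For a point $(u,v)\in\mathbb{C}^2$, the following are equivalent: (1) $(u,v)\in\mathcal{D}_1$; (2) $|1+u^2-v^2|<1+|u|^2-|v|^2$ and $0<\mathrm{Im}(u(1+\overline{v}))$; (3) the roots of the equation $(u+i)z^2+2vz+(u-i)=0$ lie in $\mathbb{D}$; (4) $|\mathrm{Im}(v)+i\,\mathrm{Im}(\overline{u}v)|<\mathrm{Im}(u)$; (5) $|v|<|u+i|$ and $|\mathrm{Im}(v)+i\,\mathrm{Im}(\overline{u}v)|<\mathrm{Im}(u)$; (6) $\left|\frac{\alpha(u-i)+v}{u+i+\alpha v}\right|<1$ for every $\alpha\in\overline{\mathbb{D}}$; (7) $\left|\frac{u-i+\overline{\alpha}v}{u+i+\alpha v}\right|<1$ for every $\alpha\in\overline{\mathbb{D}}$; (8) $2|\mathrm{Im}(v)+i\,\mathrm{Im}(\overline{u}v)|+|1+u^2-v^2|<|i+u|^2-|v|^2$; (9) $\mathrm{Im}(u)>0$ and there is $\beta=\beta_1+i\beta_2\in\mathbb{D}$ ($\beta_1,\beta_2\in\mathbb{R}$) such that $v+\beta_1u+\beta_2=0$.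
   Context: $\mathbb{D}$ is the open unit disc and $\overline{\mathbb{D}}$ the closed unit disc in $\mathbb{C}$. $\mathcal{D}_1=\{(z_1,z_2)\in\mathbb{C}^2: 1+|z_1|^2-|z_2|^2>|1+z_1^2-z_2^2|,\ \mathrm{Im}(z_1(1+\overline{z_2}))>0\}$. *)

(* Defs.v *)
(* We use the generic numClosedField notations
   'i, 'Re, 'Im, ^* (conjugation) and `|_| (modulus, as a real element of C). *)
From mathcomp Require Import all_boot all_order all_algebra complex.
From mathcomp Require Import reals.
Set Implicit Arguments. Unset Strict Implicit. Unset Printing Implicit Defensive.
Import Order.TTheory GRing.Theory Num.Theory.
Local Open Scope ring_scope.

Definition D1 (R : realType) : {pred R[i] * R[i]} :=
  [pred z | (`|1 + z.1 ^+ 2 - z.2 ^+ 2| < 1 + `|z.1| ^+ 2 - `|z.2| ^+ 2)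
            && (0 < 'Im (z.1 * (1 + z.2^*)))].

Definition open_disc (R : realType) : {pred R[i]} := [pred z | `|z| < 1].
Definition closed_disc (R : realType) : {pred R[i]} := [pred z | `|z| <= 1].
Arguments D1 : clear implicits.
Arguments open_disc : clear implicits.
Arguments closed_disc : clear implicits.

(* Main.v *)
Require Import Defs.
From mathcomp Require Import all_boot all_order all_algebra complex.
From mathcomp Require Import reals.
From mathcomp Require Import ring lra.
Import Order.TTheory GRing.Theory Num.Theory.
Local Open Scope ring_scope.
Section Real.
Context {R : rcfType}.
Implicit Types a b c d x y : R.
Lemma lt_of_sq (x y : R) : 0 <= y -> x^+2 < y^+2 -> x < y.
Proof. move=> y0 h; case: (ltrP x y) => // hyx; nra. Qed.
Lemma sq_lt (x y : R) : 0 <= x -> x < y -> x^+2 < y^+2.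
Proof. move=> x0 h; nra. Qed.
Arguments sq_lt {x y}.
Definition Q a b c d := Num.sqrt (d^+2 + (a*d - b*c)^+2) < b.


Lemma sqrtP (x : R) : 0 <= x -> 0 <= Num.sqrt x /\ Num.sqrt x ^+ 2 = x.
Proof. by move=> h; split; [apply: sqrtr_ge0 | apply: sqr_sqrtr]. Qed.

Lemma sqrt_sum2 (x y : R) : 0 <= Num.sqrt (x^+2 + y^+2) /\ Num.sqrt (x^+2 + y^+2) ^+ 2 = x^+2 + y^+2.
Proof. apply: sqrtP; nra. Qed.

Lemma cs2 (a d E : R) : (a*d - E)^+2 <= (a^+2+1)*(d^+2+E^+2).
Proof. rewrite -subr_ge0; have -> : (a^+2+1)*(d^+2+E^+2) - (a*d - E)^+2 = (a*E + d)^+2 by ring.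
exact: sqr_ge0. Qed.
Lemma Q_facts a b c d t : 0 <= t -> t^+2 = d^+2 + (a*d - b*c)^+2 -> t < b ->
  [/\ 0 < b, c^+2 + d^+2 < 1 + a^+2 + b^+2 &
      2 * (b - t) <= 1 + a^+2 + b^+2 - c^+2 - d^+2].
Proof.
move=> t0 ht tb.
have b0 : 0 < b by lra.
have tb2 : t^+2 < b^+2.
  have h1 : 0 < (b - t) * (b + t) by apply: mulr_gt0; lra.
  nra.
have hd : d^+2 < b^+2 by have := sqr_ge0 (a*d - b*c); lra.
have hbc : (b*c)^+2 < (a^+2+1) * b^+2.
  have -> : b*c = a*d - (a*d - b*c) by ring.
  have h1 := cs2 a d (a*d - b*c).
  have h2 : d^+2 + (a*d-b*c)^+2 < b^+2 by rewrite -ht; nra.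
  nra.
have hc : c^+2 + d^+2 < 1 + a^+2 + b^+2.
  have : b^+2 * (c^+2 + d^+2) < b^+2 * (1 + a^+2 + b^+2) by nra.
  rewrite ltr_pM2l //; nra.
split => //.
set RHS := 1 + a^+2 + b^+2 - c^+2 - d^+2.
have hid : RHS^+2 - 4 * (b^+2 - t^+2) = (1 + a^+2 - b^+2 - c^+2 + d^+2)^+2 + (2*a*b - 2*c*d)^+2.
  rewrite ht /RHS; ring.
have hR : 0 < RHS by rewrite /RHS; lra.
have h4 : 4 * (b - t)^+2 <= RHS^+2.
  have h2 : 0 <= (b - t) * (2*t) by apply: mulr_ge0; lra.
  have := sqr_ge0 (1 + a^+2 - b^+2 - c^+2 + d^+2); have := sqr_ge0 (2*a*b - 2*c*d).
  nra.
case: (lerP (2*(b-t)) RHS) => // h.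
have : RHS * RHS < (2 * (b - t)) * (2*(b-t)) by apply: ltr_pM; lra.
nra.
Qed.


Arguments Q_facts {a b c d t}.
Lemma L1 a b c d :
  (Num.sqrt ((1 + (a * a - b * b) + (d * d - c * c)) ^+ 2 +
     (a * b + b * a + (- (c * d) - d * c)) ^+ 2) <
  1 + Num.sqrt (a ^+ 2 + b ^+ 2) * Num.sqrt (a ^+ 2 + b ^+ 2) -
  Num.sqrt (c ^+ 2 + d ^+ 2) * Num.sqrt (c ^+ 2 + d ^+ 2) /\
  0 < - (a * d) + b * (1 + c)) <-> Q a b c d.
Proof.
rewrite /Q.
have [t0 ht] := sqrt_sum2 d (a*d - b*c).
have [S0 hS] := sqrt_sum2 (1 + (a * a - b * b) + (d * d - c * c)) (a * b + b * a + (- (c * d) - d * c)).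
have [_ hA] := sqrt_sum2 a b. have [_ hV] := sqrt_sum2 c d.
rewrite -!expr2 hA hV.
set t := Num.sqrt (d^+2 + (a*d - b*c)^+2) in t0 ht *.
set S := Num.sqrt _ in S0 hS *.
set RHS := 1 + (a^+2 + b^+2) - (c^+2 + d^+2).
have hid : RHS^+2 - S^+2 = 4 * (b^+2 - t^+2) by rewrite hS ht /RHS; ring.
split.
- case=> h1 h2.
  have h3 : S^+2 < RHS^+2 by apply: sq_lt.
  have hbt : t^+2 < b^+2 by lra.
  have he : (a*d - b*c)^+2 <= t^+2 by have := sqr_ge0 d; lra.
  have b0 : 0 < b.
    case: (ltrP 0 b) => // hb.
    have : b^+2 <= (a*d - b*c)^+2 by nra.
    lra.
  by apply: lt_of_sq; lra.
- move=> htb; have [b0 hc hR] := Q_facts t0 ht htb.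
  split.
  + apply: lt_of_sq; first by rewrite /RHS; lra.
    by have := sq_lt t0 htb; lra.
  + have he : (a*d - b*c)^+2 < b^+2 by have := sq_lt t0 htb; have := sqr_ge0 d; lra.
    have : a * d - b * c < b by apply: lt_of_sq => //; lra.
    lra.
Qed.

Lemma L5 a b c d :
  (Num.sqrt (c ^+ 2 + d ^+ 2) < Num.sqrt (a ^+ 2 + (b + 1) ^+ 2) /\ Q a b c d) <-> Q a b c d.
Proof.
split; first by case.
move=> hQ; split => //.
have [t0 ht] := sqrt_sum2 d (a*d - b*c).
have [b0 hc _] := Q_facts t0 ht hQ.
rewrite ltr_sqrt; first by nra.
have := sqr_ge0 a; have := sqr_ge0 (b+1); nra.
Qed.

Lemma L8 a b c d :
  2 * Num.sqrt (d ^+ 2 + (a * d - b * c) ^+ 2) +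
  Num.sqrt ((1 + (a * a - b * b) + (d * d - c * c)) ^+ 2 +
     (a * b + b * a + (- (c * d) - d * c)) ^+ 2) <
  Num.sqrt (a ^+ 2 + (1 + b) ^+ 2) * Num.sqrt (a ^+ 2 + (1 + b) ^+ 2) -
  Num.sqrt (c ^+ 2 + d ^+ 2) * Num.sqrt (c ^+ 2 + d ^+ 2) <-> Q a b c d.
Proof.
rewrite /Q.
have [t0 ht] := sqrt_sum2 d (a*d - b*c).
have [S0 hS] := sqrt_sum2 (1 + (a * a - b * b) + (d * d - c * c)) (a * b + b * a + (- (c * d) - d * c)).
have [_ hA] := sqrt_sum2 a (1 + b). have [_ hV] := sqrt_sum2 c d.
rewrite -!expr2 hA hV.
set t := Num.sqrt (d^+2 + (a*d - b*c)^+2) in t0 ht *.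
set S := Num.sqrt _ in S0 hS *.
set RHS := 1 + (a^+2 + b^+2) - (c^+2 + d^+2).
have hid : RHS^+2 - S^+2 = 4 * (b^+2 - t^+2) by rewrite hS ht /RHS; ring.
have hK : a ^+ 2 + (1 + b) ^+ 2 - (c ^+ 2 + d ^+ 2) = RHS + 2 * b by rewrite /RHS; ring.
rewrite hK.
split.
- move=> h.
  have hX : S < RHS + 2*b - 2*t by lra.
  have h2 : S^+2 < (RHS + 2*b - 2*t)^+2 by apply: sq_lt.
  have h3 : 0 < (b - t) * (2*b + RHS) by nra.
  have h4 : 0 < 2*b + RHS by lra.
  by rewrite -subr_gt0; rewrite pmulr_lgt0 in h3.
- move=> htb; have [b0 hc hR] := Q_facts t0 ht htb.
  suff : S < RHS + 2*b - 2*t by lra.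
  apply: lt_of_sq; first by lra.
  have h5 : 0 < (b - t) * (b + t) by apply: mulr_gt0; lra.
  have h6 : 0 <= RHS * (b - t) by apply: mulr_ge0; lra.
  nra.
Qed.

Lemma L9 a b c d :
  (0 < b /\ exists p q, Num.sqrt (p^+2 + q^+2) < 1 /\ (c + p * a + q = 0 /\ d + p * b = 0))
  <-> Q a b c d.
Proof.
rewrite /Q.
have [t0 ht] := sqrt_sum2 d (a*d - b*c).
set t := Num.sqrt (d^+2 + (a*d - b*c)^+2) in t0 ht *.
split.
- case=> b0 [p [q [hpq [h1 h2]]]].
  have [s0 hs] := sqrt_sum2 p q.
  have hpq2 : p^+2 + q^+2 < 1 by rewrite -hs; have := sq_lt s0 hpq; rewrite expr1n.
  have hd : d = - (p * b) by lra.
  have hc : c = - (p * a) - q by lra.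
  have : t^+2 = b^+2 * (p^+2 + q^+2) by rewrite ht hd hc; ring.
  move=> htt; apply: lt_of_sq; first lra.
  rewrite htt -subr_gt0; have -> : b^+2 - b^+2*(p^+2+q^+2) = b^+2 * (1 - (p^+2+q^+2)) by ring.
  by apply: mulr_gt0; [exact: exprn_gt0 | lra].
- move=> htb; have [b0 hc hR] := Q_facts t0 ht htb.
  split => //.
  exists (- d / b), ((a * d - b * c) / b).
  split; last by split; field; lra.
  have -> : (- d / b)^+2 + ((a * d - b * c) / b)^+2 = (t / b)^+2.
    by rewrite !expr_div_n ht; field; lra.
  rewrite sqrtr_sqr ger0_norm; last by apply: divr_ge0; lra.
  by rewrite ltr_pdivrMr // mul1r.
Qed.

Lemma L7 a b c d :
  (forall p q, p^+2 + q^+2 <= 1 ->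
     (a + (p * c + q * d)) ^+ 2 + (b - 1 + (p * d - q * c)) ^+ 2 <
     (a + (p * c - q * d)) ^+ 2 + (b + 1 + (p * d + q * c)) ^+ 2) <-> Q a b c d.
Proof.
rewrite /Q.
have [t0 ht] := sqrt_sum2 d (a*d - b*c).
set t := Num.sqrt (d^+2 + (a*d - b*c)^+2) in t0 ht *.
set e := a * d - b * c in ht *.
have hid : forall p q, (a + (p * c - q * d)) ^+ 2 + (b + 1 + (p * d + q * c)) ^+ 2
   - ((a + (p * c + q * d)) ^+ 2 + (b - 1 + (p * d - q * c)) ^+ 2) = 4 * b + 4 * (p * d - q * e).
  by move=> p q; rewrite /e; ring.
split.
- move=> h.
  have [t00|tpos] := eqVneq t 0.
    have := h 1 0; rewrite expr1n expr0n /= addr0 lexx => /(_ isT).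
    have hd : d = 0 by have := sqr_ge0 e; rewrite t00 expr0n /= in ht; nra.
    have := hid 1 0; rewrite hd t00; lra.
  have tp : 0 < t by rewrite lt0r tpos.
  have := h (- d / t) (e / t).
  have hx : (- d / t)^+2 + (e / t)^+2 = 1.
    by rewrite !expr_div_n sqrrN -mulrDl -ht divff // expf_neq0.
  rewrite hx lexx => /(_ isT) h2.
  have := hid (- d / t) (e / t).
  have -> : - d / t * d - e / t * e = - t.
    have -> : - d / t * d - e / t * e = - (t^+2 / t) by rewrite ht; field.
    by rewrite expr2 mulfK.
  lra.
- move=> htb p q hpq.
  have := hid p q.
  have cs : (p * d - q * e)^+2 <= (p^+2 + q^+2) * t^+2.
    rewrite ht -subr_ge0; have -> : (p ^+ 2 + q ^+ 2) * (d ^+ 2 + e ^+ 2) - (p * d - q * e) ^+ 2 = (p * e + q * d)^+2 by ring.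
    exact: sqr_ge0.
  have : (p * d - q * e)^+2 <= t^+2 by have := sqr_ge0 t; nra.
  move=> h2.
  have : - t <= p * d - q * e.
    case: (lerP (-t) (p * d - q * e)) => // h3; nra.
  lra.
Qed.

Lemma Lback a b c d :
  (forall p q, p^+2 + q^+2 = 1 -> 0 < b + (p * d - q * (a * d - b * c))) -> Q a b c d.
Proof.
rewrite /Q.
have [t0 ht] := sqrt_sum2 d (a*d - b*c).
set t := Num.sqrt (d^+2 + (a*d - b*c)^+2) in t0 ht *.
set e := a * d - b * c in ht *.
move=> h.
have [t00|tpos] := eqVneq t 0.
  have := h 1 0; rewrite expr1n expr0n /= addr0 => /(_ erefl).
  have hd : d = 0 by have := sqr_ge0 e; rewrite t00 expr0n /= in ht; nra.
  rewrite hd t00; lra.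
have tp : 0 < t by rewrite lt0r tpos.
have hx : (- d / t)^+2 + (e / t)^+2 = 1.
  by rewrite !expr_div_n sqrrN -mulrDl -ht divff // expf_neq0.
have := h _ _ hx.
have -> : - d / t * d - e / t * e = - t.
  have -> : - d / t * d - e / t * e = - (t^+2 / t) by rewrite ht; field.
  by rewrite expr2 mulfK.
lra.
Qed.

Lemma L6 a b c d :
  (forall p q, p^+2 + q^+2 <= 1 ->
     (p * a - q * (b - 1) + c) ^+ 2 + (p * (b - 1) + q * a + d) ^+ 2 <
     (a + (p * c - q * d)) ^+ 2 + (b + 1 + (p * d + q * c)) ^+ 2) <-> Q a b c d.
Proof.
have hid : forall p q, (a + (p * c - q * d)) ^+ 2 + (b + 1 + (p * d + q * c)) ^+ 2
   - ((p * a - q * (b - 1) + c) ^+ 2 + (p * (b - 1) + q * a + d) ^+ 2) =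
   (a^+2 + (b+1)^+2 - c^+2 - d^+2) * (1 - (p^+2 + q^+2)) + 4 * (p^+2 + q^+2) * b
     + 4 * (p * d - q * (a * d - b * c)).
  by move=> p q; ring.
split.
- move=> h; apply: Lback => p q hpq.
  have := h p q; rewrite hpq lexx => /(_ isT).
  have := hid p q; rewrite hpq; lra.
- rewrite /Q => htb p q hpq.
  have [t0 ht] := sqrt_sum2 d (a*d - b*c).
  set t := Num.sqrt (d^+2 + (a*d - b*c)^+2) in t0 ht htb *.
  have [b0 hc hR] := Q_facts t0 ht htb.
  set e := a * d - b * c in ht hid *.
  have [r0 hr] := sqrt_sum2 p q.
  set r := Num.sqrt (p^+2 + q^+2) in r0 hr.
  rewrite -hr in hpq hid.
  have r1 : r <= 1 by case: (lerP r 1) => // h1; nra.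
  have cs : (p * d - q * e)^+2 <= (r * t)^+2.
    rewrite exprMn hr ht -subr_ge0; have -> : (p ^+ 2 + q ^+ 2) * (d ^+ 2 + e ^+ 2) - (p * d - q * e) ^+ 2 = (p * e + q * d)^+2 by ring.
    exact: sqr_ge0.
  have rt0 : 0 <= r * t by apply: mulr_ge0.
  have h1 : - (r * t) <= p * d - q * e.
    case: (lerP (- (r * t)) (p * d - q * e)) => // h3; nra.
  have := hid p q.
  have h2 : 0 <= (1 + a ^+ 2 + b ^+ 2 - c ^+ 2 - d ^+ 2 - 2 * (b - t)) * (1 - r^+2).
    apply: mulr_ge0; first lra.
    rewrite subr_ge0; nra.
  have h3 : 0 <= t * (1 - r)^+2 by apply: mulr_ge0 => //; exact: sqr_ge0.
  nra.
Qed.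
End Real.
Arguments Q_facts {R a b c d t}.
Arguments sq_lt {R x y}.

Local Open Scope complex_scope.

Lemma schur_id (K : comRingType) (A Ac B Bc C Cc z zc w wc : K) :
  A*(z+w) = -B -> Ac*(zc+wc) = -Bc -> A*(z*w) = C -> Ac*(zc*wc) = Cc ->
  (A*Ac)^+2 * ((1 - z*zc)*(1 - w*wc)*((1 - zc*w)*(1 - z*wc))) =
    (A*Ac - C*Cc)^+2 - (C*Bc - Ac*B)*(Cc*B - A*Bc)
  /\ A*Ac*(1 - z*zc*(w*wc)) = A*Ac - C*Cc.
Proof.
move=> h1 h2 h3 h4.
have -> : B = - (A*(z+w)) by rewrite h1 opprK.
have -> : Bc = - (Ac*(zc+wc)) by rewrite h2 opprK.
rewrite -h3 -h4; split; ring.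
Qed.

Arguments schur_id {K A Ac B Bc C Cc z zc w wc}.
Section S.
Context {R : realType}.
Lemma conjE (x : R[i]) : x^*%R = x^*%C.
Proof. reflexivity. Qed.
Lemma iE : 'i%R = 'i%C :> R[i].
Proof. reflexivity. Qed.
Lemma ImE (a b : R) : 'Im (a +i* b) = b +i* 0.
Proof. by rewrite -complexIm. Qed.
Lemma ReE (a b : R) : 'Re (a +i* b) = a +i* 0.
Proof. by rewrite -complexRe. Qed.
Lemma normE (a b : R) : `|a +i* b| = (Num.sqrt (a^+2 + b^+2)) +i* 0.
Proof. by rewrite normc_def. Qed.
Lemma oneE : (1 : R[i]) = 1 +i* 0. Proof. by []. Qed.
Lemma twoE : (2 : R[i]) = 2 +i* 0. Proof. by rewrite [LHS]mulr2n oneE; simpc; rewrite -mulr2n. Qed.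
Lemma expr2E (x : R[i]) : x ^+ 2 = x * x. Proof. by rewrite expr2. Qed.
Lemma normcE (a b : R) : Normc.normc (a +i* b) = Num.sqrt (a^+2 + b^+2). Proof. by []. Qed.
Lemma ceqP (a b c d : R) : a = c -> b = d -> a +i* b = c +i* d.
Proof. by move=> -> ->. Qed.
Lemma ceq0 (a b : R) : (a +i* b = 0) <-> (a = 0 /\ b = 0).
Proof. by split => [[-> ->]|[-> ->]]. Qed.

Ltac cnorm := rewrite ?conjE ?iE ?twoE ?oneE ?expr2E; do 3 (simpc; rewrite ?ImE ?ReE ?normE ?normcE ?expr2E); rewrite /=.

Lemma sqrt_lt (X Y : R) : 0 <= X -> (Num.sqrt X < Num.sqrt Y) = (X < Y).
Proof.
move=> hX; case: (ltrP 0 Y) => hY; first by rewrite ltr_sqrt.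
rewrite (ler0_sqrtr hY); apply/idP/idP => h.
  by have := sqrtr_ge0 X; lra.
lra.
Qed.
Lemma sqrt_lt1 (X : R) : 0 <= X -> (Num.sqrt X < 1) = (X < 1).
Proof. by move=> h; rewrite -{1}(sqrtr1 R) sqrt_lt. Qed.
Lemma sqrt_le1 (X : R) : 0 <= X -> (Num.sqrt X <= 1) = (X <= 1).
Proof. by move=> h; rewrite -{1}(sqrtr1 R) ler_sqrt. Qed.

Lemma ratio_lt1 (n dd : R[i]) : (dd != 0 /\ `|n / dd| < 1) <-> `|n| < `|dd|.
Proof.
split.
- by case=> hd; rewrite normf_div ltr_pdivrMr ?normr_gt0 // mul1r.
- move=> h; have hd : dd != 0.
    by apply/eqP => h0; move: h; rewrite h0 normr0 => /(le_lt_trans (normr_ge0 n)); rewrite ltxx.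
  by split=> //; rewrite normf_div ltr_pdivrMr ?normr_gt0 // mul1r.
Qed.

Lemma P6 (a b c d : R) :
  (forall alpha : R[i], alpha \in closed_disc R ->
     (a +i* b) + 'i + alpha * (c +i* d) != 0 /\
     `|(alpha * ((a +i* b) - 'i) + (c +i* d)) / ((a +i* b) + 'i + alpha * (c +i* d))| < 1)
  <-> Q a b c d.
Proof.
rewrite -L6; split.
- move=> h p q hpq.
  have hin : (p +i* q) \in closed_disc R by rewrite inE /=; cnorm; rewrite sqrt_le1 ?addr_ge0 ?sqr_ge0.
  move: (h _ hin) => /ratio_lt1.
  by cnorm; rewrite sqrt_lt ?addr_ge0 ?sqr_ge0.
- move=> h [p q] hin; apply/ratio_lt1.
  have hpq : p^+2+q^+2 <= 1 by move: hin; rewrite inE /=; cnorm; rewrite sqrt_le1 ?addr_ge0 ?sqr_ge0.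
  by cnorm; rewrite sqrt_lt ?addr_ge0 ?sqr_ge0 //; apply: h.
Qed.

Lemma P7 (a b c d : R) :
  (forall alpha : R[i], alpha \in closed_disc R ->
     (a +i* b) + 'i + alpha * (c +i* d) != 0 /\
     `|((a +i* b) - 'i + alpha^* * (c +i* d)) / ((a +i* b) + 'i + alpha * (c +i* d))| < 1)
  <-> Q a b c d.
Proof.
rewrite -L7; split.
- move=> h p q hpq.
  have hin : (p +i* q) \in closed_disc R by rewrite inE /=; cnorm; rewrite sqrt_le1 ?addr_ge0 ?sqr_ge0.
  move: (h _ hin) => /ratio_lt1.
  by cnorm; rewrite sqrt_lt ?addr_ge0 ?sqr_ge0.
- move=> h [p q] hin; apply/ratio_lt1.
  have hpq : p^+2+q^+2 <= 1 by move: hin; rewrite inE /=; cnorm; rewrite sqrt_le1 ?addr_ge0 ?sqr_ge0.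
  by cnorm; rewrite sqrt_lt ?addr_ge0 ?sqr_ge0 //; apply: h.
Qed.

Lemma P2 (a b c d : R) :
  (`|1 + (a +i* b) ^+ 2 - (c +i* d) ^+ 2| < 1 + `|a +i* b| ^+ 2 - `|c +i* d| ^+ 2
    /\ 0 < 'Im ((a +i* b) * (1 + (c +i* d)^*))) <-> Q a b c d.
Proof. split => [h|h]; [move: h; cnorm => h; exact/L1 | cnorm; exact/L1]. Qed.

Lemma P1 (a b c d : R) : ((a +i* b), (c +i* d)) \in D1 R <-> Q a b c d.
Proof.
rewrite -P2 inE /=; split; first by case/andP.
by case=> h1 h2; rewrite h1 h2.
Qed.

Lemma P4 (a b c d : R) :
  `|'Im (c +i* d) + 'i * 'Im ((a +i* b)^* * (c +i* d))| < 'Im (a +i* b) <-> Q a b c d.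
Proof. by rewrite /Q; cnorm. Qed.

Lemma P5 (a b c d : R) :
  (`|c +i* d| < `|(a +i* b) + 'i| /\
   `|'Im (c +i* d) + 'i * 'Im ((a +i* b)^* * (c +i* d))| < 'Im (a +i* b)) <-> Q a b c d.
Proof. split => [h|h]; [move: h; cnorm => h; exact/L5 | cnorm; exact/L5]. Qed.

Lemma P8 (a b c d : R) :
  2 * `|'Im (c +i* d) + 'i * 'Im ((a +i* b)^* * (c +i* d))| + `|1 + (a +i* b) ^+ 2 - (c +i* d) ^+ 2|
               < `|'i + (a +i* b)| ^+ 2 - `|(c +i* d)| ^+ 2 <-> Q a b c d.
Proof. split => [h|h]; [move: h; cnorm => h; exact/L8 | cnorm; exact/L8]. Qed.

Lemma P9 (a b c d : R) :
  (0 < 'Im (a +i* b) /\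
    (exists beta : R[i], beta \in open_disc R /\
       (c +i* d) + 'Re beta * (a +i* b) + 'Im beta = 0)) <-> Q a b c d.
Proof.
rewrite -L9; split.
- case=> hb [[p q] [hin heq]]; split; first by move: hb; cnorm.
  exists p, q; split; first by move: hin; rewrite inE /=; cnorm.
  by move: heq; cnorm => /ceq0.
- case=> hb [p [q [hin heq]]]; split; first by cnorm.
  exists (p +i* q); split; first by rewrite inE /=; cnorm.
  by cnorm; apply/ceq0.
Qed.

Lemma key {a b c d x y p q : R} :
  ((a +i* b) + 'i) * ((x +i* y) + (p +i* q)) = - (2 * (c +i* d)) ->
  ((a +i* b) + 'i) * ((x +i* y) * (p +i* q)) = (a +i* b) - 'i ->
  (a^+2 + (b+1)^+2) * (a^+2 + (b+1)^+2) *
    ((1 - (x^+2 + y^+2)) * (1 - (p^+2 + q^+2)) * ((1 - (x * p + y * q))^+2 + (x * q - y * p)^+2))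
    = 16 * (b^+2 - (d^+2 + (a*d - b*c)^+2))
  /\ (a^+2 + (b+1)^+2) * (1 - (x^+2 + y^+2) * (p^+2 + q^+2)) = 4 * b.
Proof.
set A := (a +i* b) + 'i; set B := 2 * (c +i* d); set C := (a +i* b) - 'i.
set z := x +i* y; set w := p +i* q.
move=> h1 h3.
have h2 : A^* * (z^* + w^*) = - B^* by rewrite -rmorphD -rmorphM h1 rmorphN.
have h4 : A^* * (z^* * w^*) = C^* by rewrite -rmorphM -rmorphM h3.
have [E1 E2] := schur_id h1 h2 h3 h4.
have fA : A * A^* = (a^+2 + (b+1)^+2) +i* 0 by rewrite /A; cnorm; apply: ceqP; ring.
have fz : 1 - z * z^* = (1 - (x^+2 + y^+2)) +i* 0 by rewrite /z; cnorm; apply: ceqP; ring.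
have fw : 1 - w * w^* = (1 - (p^+2 + q^+2)) +i* 0 by rewrite /w; cnorm; apply: ceqP; ring.
have fG : (1 - z^* * w) * (1 - z * w^*) = ((1 - (x * p + y * q))^+2 + (x * q - y * p)^+2) +i* 0.
  by rewrite /z /w; cnorm; apply: ceqP; ring.
have fR : (A * A^* - C * C^*)^+2 - (C * B^* - A^* * B) * (C^* * B - A * B^*)
   = (16 * (b^+2 - (d^+2 + (a*d - b*c)^+2))) +i* 0.
  by rewrite /A /B /C; cnorm; apply: ceqP; ring.
have fAC : A * A^* - C * C^* = (4 * b) +i* 0 by rewrite /A /C; cnorm; apply: ceqP; ring.
have fzw : 1 - z * z^* * (w * w^*) = (1 - (x^+2 + y^+2) * (p^+2 + q^+2)) +i* 0.
  by rewrite /z /w; cnorm; apply: ceqP; ring.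
rewrite fR fA fz fw fG in E1.
rewrite fAC fA fzw in E2.
move: E1 E2; rewrite expr2E; simpc.
by move=> [E1] [E2]; split; lra.
Qed.

Lemma RF {M Z W G b T : R} : 0 <= M -> 0 <= Z -> 0 <= W -> 0 <= G ->
  M * M * ((1 - Z) * (1 - W) * G) = 16 * (b^+2 - T) -> M * (1 - Z * W) = 4 * b ->
  T < b^+2 -> 0 < b -> Z < 1.
Proof.
move=> M0 Z0 W0 G0 E1 E2 hT hb.
have hp : 0 < M * M * ((1 - Z) * (1 - W) * G) by rewrite E1; lra.
have h1 : 0 < (1 - Z) * (1 - W).
  case: (ltrP 0 ((1 - Z) * (1 - W))) => // h.
  have : M * M * ((1 - Z) * (1 - W) * G) <= 0.
    rewrite mulrC; apply: mulr_le0_ge0; last by apply: mulr_ge0.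
    by apply: mulr_le0_ge0.
  lra.
have h2 : 0 < 1 - Z * W.
  case: (ltrP 0 (1 - Z * W)) => // h.
  have : M * (1 - Z * W) <= 0 by apply: mulr_ge0_le0.
  lra.
case: (ltrP Z 1) => // hZ.
have hZ' : 1 < Z.
  case: (ltrP 1 Z) => // hZ2.
  have hZ1 : Z = 1 by apply/eqP; rewrite eq_le hZ hZ2.
  by rewrite hZ1 subrr mul0r ltxx in h1.
have hW : 1 < W by nra.
nra.
Qed.

Lemma RB {a b M Z W G T : R} : M = a^+2 + (b+1)^+2 -> 0 <= Z -> Z < 1 -> 0 <= W -> W < 1 -> 0 < G ->
  M * M * ((1 - Z) * (1 - W) * G) = 16 * (b^+2 - T) -> M * (1 - Z * W) = 4 * b ->
  0 < b /\ T < b^+2.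
Proof.
move=> hM Z0 Z1 W0 W1 G0 E1 E2.
have ZW : Z * W < 1 by nra.
have M0 : 0 < M.
  case: (ltrP 0 M) => // h.
  have hM0 : M = 0 by have := sqr_ge0 a; have := sqr_ge0 (b+1); lra.
  rewrite hM0 mul0r in E2.
  have hb : b = 0 by lra.
  rewrite hM0 hb add0r expr1n in hM; have := sqr_ge0 a; lra.
have hb : 0 < b.
  have : 0 < M * (1 - Z * W) by apply: mulr_gt0; lra.
  lra.
split => //.
have : 0 < M * M * ((1 - Z) * (1 - W) * G).
  apply: mulr_gt0; first by apply: mulr_gt0.
  apply: mulr_gt0 => //; apply: mulr_gt0; lra.
rewrite E1; lra.
Qed.

Lemma roots_rel {A B C z : R[i]} : A != 0 -> A * z ^+ 2 + B * z + C = 0 ->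
  A * (z + (- B / A - z)) = - B /\ A * (z * (- B / A - z)) = C.
Proof.
move=> hA hz; split; first by field.
have -> : A * (z * (- B / A - z)) = C - (A * z ^+ 2 + B * z + C) by field.
by rewrite hz subr0.
Qed.

Lemma P3 (a b c d : R) :
  (((a +i* b) + 'i != 0) /\
   (forall z : R[i], ((a +i* b) + 'i) * z ^+ 2 + 2 * (c +i* d) * z + ((a +i* b) - 'i) = 0 ->
                               z \in open_disc R)) <-> Q a b c d.
Proof.
rewrite /Q.
have [t0 ht] := sqrt_sum2 d (a*d - b*c).
set t := Num.sqrt (d^+2 + (a*d - b*c)^+2) in t0 ht *.
split.
- case=> hA hroot.
  set A := (a +i* b) + 'i in hA hroot *; set C := (a +i* b) - 'i in hroot *.
  set B := 2 * (c +i* d) in hroot *.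
  set s := sqrtC (B ^+ 2 - 4 * A * C).
  have hs : s ^+ 2 = B ^+ 2 - 4 * A * C by rewrite sqrtCK.
  have h20 : (2 : R[i]) != 0 by rewrite pnatr_eq0.
  set z0 := (- B + s) / (2 * A).
  have hz0 : A * z0 ^+ 2 + B * z0 + C = 0.
    have e1 : 4 * A * (A * z0 ^+ 2 + B * z0 + C) = (2 * A * z0 + B) ^+ 2 - (B ^+ 2 - 4 * A * C) by ring.
    have e2 : 2 * A * z0 + B = s by rewrite /z0; field.
    rewrite e2 hs subrr in e1.
    move/eqP: e1; rewrite mulf_eq0 => /orP [|/eqP //].
    by rewrite mulf_eq0 (negPf hA) orbF pnatr_eq0.
  set w0 := - B / A - z0.
  have hw0 : A * w0 ^+ 2 + B * w0 + C = 0.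
    by rewrite -hz0 /w0; field.
  have [h1 h2] := roots_rel hA hz0.
  have hz : z0 \in open_disc R by apply: hroot.
  have hw : w0 \in open_disc R by apply: hroot.
  rewrite -/w0 in h1 h2.
  move: z0 w0 hz hw h1 h2 {hz0 hw0} => [x y] [p q] hz hw h1 h2.
  have [E1 E2] := key h1 h2.
  move: hz hw; rewrite !inE /=; cnorm; rewrite !sqrt_lt1 ?addr_ge0 ?sqr_ge0 // => hz hw.
  have G0 : 0 < (1 - (x * p + y * q))^+2 + (x * q - y * p)^+2.
    have hid : (x * p + y * q)^+2 + (x * q - y * p)^+2 = (x^+2 + y^+2) * (p^+2 + q^+2) by ring.
    have h3 : (x * p + y * q)^+2 < 1.
      have := sqr_ge0 (x * q - y * p); have := sqr_ge0 x; have := sqr_ge0 y;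
      have := sqr_ge0 p; have := sqr_ge0 q; nra.
    have h4 : x * p + y * q < 1 by apply: lt_of_sq => //; rewrite expr1n.
    have := sqr_ge0 (x * q - y * p); have : 0 < (1 - (x * p + y * q))^+2 by apply: exprn_gt0; lra.
    lra.
  have [hb hT] := RB erefl (addr_ge0 (sqr_ge0 x) (sqr_ge0 y)) hz (addr_ge0 (sqr_ge0 p) (sqr_ge0 q)) hw G0 E1 E2.
  by apply: lt_of_sq; [lra | rewrite ht].
- move=> htb; have [b0 _ _] := Q_facts t0 ht htb.
  have hA : (a +i* b) + 'i != 0.
    by apply/eqP; cnorm => /ceq0 [_ h]; lra.
  split => // z hz.
  have [h1 h2] := roots_rel hA hz.
  move: z (- (2 * (c +i* d)) / ((a +i* b) + 'i) - z) h1 h2 {hz} => [x y] [p q] h1 h2.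
  have [E1 E2] := key h1 h2.
  rewrite inE /=; cnorm; rewrite sqrt_lt1 ?addr_ge0 ?sqr_ge0 //.
  apply: (RF _ _ _ _ E1 E2).
  + by have := sqr_ge0 a; have := sqr_ge0 (b+1); lra.
  + by have := sqr_ge0 x; have := sqr_ge0 y; lra.
  + by have := sqr_ge0 p; have := sqr_ge0 q; lra.
  + by have := sqr_ge0 (x * q - y * p); have := sqr_ge0 (1 - (x * p + y * q)); lra.
  + by rewrite -ht; apply: sq_lt.
  + exact: b0.
Qed.
End S.

Local Close Scope complex_scope.
Theorem theorem4p4 (R : realType) (u v : R[i]) :
  [<->
   (* (1) *) (u, v) \in D1 R;
   (* (2) *) `|1 + u ^+ 2 - v ^+ 2| < 1 + `|u| ^+ 2 - `|v| ^+ 2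
               /\ 0 < 'Im (u * (1 + v^*));
   (* (3) *) (u + 'i != 0) /\
             (forall z : R[i], (u + 'i) * z ^+ 2 + 2 * v * z + (u - 'i) = 0 ->
                               z \in open_disc R);
   (* (4) *) `|'Im v + 'i * 'Im (u^* * v)| < 'Im u;
   (* (5) *) `|v| < `|u + 'i| /\ `|'Im v + 'i * 'Im (u^* * v)| < 'Im u;
   (* (6) *) (forall alpha : R[i], alpha \in closed_disc R ->
                u + 'i + alpha * v != 0 /\
                `|(alpha * (u - 'i) + v) / (u + 'i + alpha * v)| < 1);
   (* (7) *) (forall alpha : R[i], alpha \in closed_disc R ->
                u + 'i + alpha * v != 0 /\
                `|(u - 'i + alpha^* * v) / (u + 'i + alpha * v)| < 1);
   (* (8) *) 2 * `|'Im v + 'i * 'Im (u^* * v)| + `|1 + u ^+ 2 - v ^+ 2|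
               < `|'i + u| ^+ 2 - `|v| ^+ 2;
   (* (9) *) 0 < 'Im u /\
             (exists beta : R[i], beta \in open_disc R /\
                v + 'Re beta * u + 'Im beta = 0)].
Proof.
case: u => a b; case: v => c d.
have e1 := P1 a b c d; have e2 := P2 a b c d; have e3 := P3 a b c d.
have e4 := P4 a b c d; have e5 := P5 a b c d; have e6 := P6 a b c d.
have e7 := P7 a b c d; have e8 := P8 a b c d; have e9 := P9 a b c d.
tfae.
- by move=> /e1 /e2.
- by move=> /e2 /e3.
- by move=> /e3 /e4.
- by move=> /e4 /e5.
- by move=> /e5 /e6.
- by move=> /e6 /e7.
- by move=> /e7 /e8.
- by move=> /e8 /e9.
- by move=> /e9 /e1.
Qed.
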